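(* Let $M$ be a monoid, $\mathcal F$ a Grothendieck topology on $M$, and $A$ a filtered left $M$-set with corresponding point $\mathsf p_A$ of $\mathscr{Sets}_M$. Then $\mathsf p_A\pitchfork \mathbf{Sh}(\mathcal F)$ if and only if for every $\mathfrak a\in\mathcal F$ the canonical map $\mathfrak a\otimes_M A\to A$, $x\otimes a\mapsto xa$, is a bijection.
   Context: $\mathscr{Sets}_M$ is the topos of right $M$-sets. A left $M$-set $A$ is filtered if $(-)\otimes_M A$ from right $M$-sets to sets preserves finite limits; the associated point $\mathsf p_A$ has inverse image $X\mapsto X\otimes_M A$ and direct image $\mathsf p_{A*}(S)=\mathrm{Hom}_{\mathrm{Sets}}(A,S)$ with right action $(\alpha m)(a)=\alpha(ma)$. For a right ideal $\mathfrak a$ and $m\in M$, $(\mathfrak a:m)=\{x\in M\mid mx\in\mathfrak a\}$. A Grothendieck topology on $M$ is a set $\mathcal F$ of right ideals such that (T1) $M\in\mathcal F$; (T2) $\mathfrak a\in\mathcal F$, $m\in M$ imply $(\mathfrak a:m)\in\mathcal F$; (T3) if $\mathfrak b\in\mathcal F$ and $\mathfrak a$ is a right ideal with $(\mathfrak a:b)\in\mathcal F$ for all $b\in\mathfrak b$, then $\mathfrak a\in\mathcal F$. A right $M$-set $X$ is an $\mathcal F$-sheaf if for every $\mathfrak a\in\mathcal F$ the map $X\to\mathrm{Hom}_M(\mathfrak a,X)$, $x\mapsto(y\mapsto xy)$, is a bijection; $\mathbf{Sh}(\mathcal F)$ is the full subcategory of sheaves. For a point $\mathsf p$ and a full subcategory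 $\mathscr T$, $\mathsf p\pitchfork\mathscr T$ means $\mathsf p_*(S)\in\mathscr T$ for every set $S$. *)

(* Defs.v *)
From Stdlib Require Import Relations ClassicalEpsilon FunctionalExtensionality.

Set Implicit Arguments.
Unset Strict Implicit.

Record monoid := Monoid {
  mcar :> Type;
  mmul : mcar -> mcar -> mcar;
  mone : mcar;
  massoc : forall x y z, mmul x (mmul y z) = mmul (mmul x y) z;
  mone_l : forall x, mmul mone x = x;
  mone_r : forall x, mmul x mone = x }.

Record rmset (M : monoid) := RMSet {
  rcar :> Type;
  ract : rcar -> M -> rcar;
  ract_one : forall x, ract x (@mone M) = x;
  ract_mul : forall x m n, ract (ract x m) n = ract x (@mmul M m n) }.

Record lmset (M : monoid) := LMSet {
  lcar :> Type;
  lact : M -> lcar -> lcar;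
  lact_one : forall a, lact (@mone M) a = a;
  lact_mul : forall m n a, lact m (lact n a) = lact (@mmul M m n) a }.

Arguments ract {M} r _ _.
Arguments lact {M} l _ _.

Record rhom (M : monoid) (X Y : rmset M) := RHom {
  hfun :> X -> Y;
  hequiv : forall x m, hfun (ract X x m) = ract Y (hfun x) m }.

Definition bij (U V : Type) (f : U -> V) : Prop :=
  (forall u u', f u = f u' -> u = u') /\ (forall v, exists u, f u = v).

Section Tensor.
Variables (M : monoid) (X : rmset M) (A : lmset M).

Definition tgen (p q : X * A) : Prop :=
  exists (x : X) (m : M) (a : A), p = (ract X x m, a) /\ q = (x, lact A m a).

Definition trel : relation (X * A) := clos_refl_sym_trans _ tgen.

(* the quotient (X * A)/trel, as the type of equivalence classes *)
Definition tensor : Type := { P : X * A -> Prop | exists p, P = trel p }.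

Definition tens (x : X) (a : A) : tensor :=
  exist _ (trel (x, a)) (ex_intro _ (x, a) eq_refl).

Definition trep (t : tensor) : X * A :=
  proj1_sig (constructive_indefinite_description _ (proj2_sig t)).
End Tensor.

Definition tmap (M : monoid) (X Y : rmset M) (A : lmset M) (f : X -> Y)
  (t : tensor X A) : tensor Y A :=
  let p := trep t in @tens M Y A (f (fst p)) (snd p).

Definition unit_rmset (M : monoid) : rmset M :=
  @RMSet M unit (fun x _ => x) (fun x => eq_refl) (fun x _ _ => eq_refl).

Section Pullback.
Variables (M : monoid) (X Y Z : rmset M) (f : rhom X Z) (g : rhom Y Z).

Definition pb_car : Type := { p : X * Y | f (fst p) = g (snd p) }.

Definition pb_act (p : pb_car) (m : M) : pb_car.
Proof.
  refine (exist _ (ract X (fst (proj1_sig p)) m, ract Y (snd (proj1_sig p)) m) _).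
  simpl. rewrite !hequiv, (proj2_sig p). reflexivity.
Defined.

Lemma pb_act_one : forall p, pb_act p (@mone M) = p.
Proof.
  intros [[x y] e]. unfold pb_act; simpl.
  apply eq_sig_hprop.
  - intros; apply Classical_Prop.proof_irrelevance.
  - simpl. rewrite !ract_one. reflexivity.
Qed.

Lemma pb_act_mul : forall p m n, pb_act (pb_act p m) n = pb_act p (@mmul M m n).
Proof.
  intros [[x y] e] m n. apply eq_sig_hprop.
  - intros; apply Classical_Prop.proof_irrelevance.
  - simpl. rewrite !ract_mul. reflexivity.
Qed.

Definition pullback : rmset M := RMSet pb_act_one pb_act_mul.

Definition pb1 (p : pullback) : X := fst (proj1_sig p).
Definition pb2 (p : pullback) : Y := snd (proj1_sig p).
End Pullback.

(* ---------- filtered left M-sets ----------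
   (-) (x)_M A : Sets_M -> Sets preserves finite limits, i.e. it preserves the
   terminal object and pullbacks (these generate all finite limits). *)
Definition filtered (M : monoid) (A : lmset M) : Prop :=
  (exists t : tensor (unit_rmset M) A, forall t', t' = t) /\
  (forall (X Y Z : rmset M) (f : rhom X Z) (g : rhom Y Z),
     let c := fun t : tensor (pullback f g) A =>
                (tmap (@pb1 M X Y Z f g) t, tmap (@pb2 M X Y Z f g) t) in
     (forall t t', c t = c t' -> t = t') /\
     (forall uv : tensor X A * tensor Y A,
        tmap f (fst uv) = tmap g (snd uv) -> exists t, c t = uv)).

(* ---------- direct image of the point p_A ----------
   p_{A*}(S) = Hom_Sets(A, S) with (alpha m)(a) = alpha (m a). *)
Section Pstar.
Variables (M : monoid) (A : lmset M) (S : Type).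

Definition pstar_act (al : A -> S) (m : M) : A -> S := fun a => al (lact A m a).

Lemma pstar_one : forall al, pstar_act al (@mone M) = al.
Proof. intros al; apply functional_extensionality; intro a.
  unfold pstar_act; rewrite lact_one; reflexivity. Qed.

Lemma pstar_mul : forall al m n, pstar_act (pstar_act al m) n = pstar_act al (@mmul M m n).
Proof. intros al m n; apply functional_extensionality; intro a.
  unfold pstar_act; rewrite lact_mul; reflexivity. Qed.

Definition pstar : rmset M := RMSet pstar_one pstar_mul.
End Pstar.

Definition right_ideal (M : monoid) (I : M -> Prop) : Prop :=
  forall x m, I x -> I (@mmul M x m).

Definition colon (M : monoid) (I : M -> Prop) (m : M) : M -> Prop :=
  fun x => I (@mmul M m x).

Section IdealRMSet.
Variables (M : monoid) (I : M -> Prop) (HI : right_ideal I).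

Definition id_act (y : {m : M | I m}) (m : M) : {m : M | I m} :=
  exist _ (@mmul M (proj1_sig y) m) (HI m (proj2_sig y)).

Lemma id_act_one : forall y, id_act y (@mone M) = y.
Proof. intros [y hy]. apply eq_sig_hprop.
  - intros; apply Classical_Prop.proof_irrelevance.
  - simpl; apply mone_r. Qed.

Lemma id_act_mul : forall y m n, id_act (id_act y m) n = id_act y (@mmul M m n).
Proof. intros [y hy] m n. apply eq_sig_hprop.
  - intros; apply Classical_Prop.proof_irrelevance.
  - simpl; symmetry; apply massoc. Qed.

Definition ideal_rmset : rmset M := RMSet id_act_one id_act_mul.
End IdealRMSet.

Record grothendieck_topology (M : monoid) (F : (M -> Prop) -> Prop) : Prop := {
  top_ideal : forall I, F I -> right_ideal I;
  top_T1 : F (fun _ => True);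
  top_T2 : forall I m, F I -> F (colon I m);
  top_T3 : forall I J, F J -> right_ideal I ->
             (forall b, J b -> F (colon I b)) -> F I }.

(* X is an F-sheaf: for every a in F, X -> Hom_M(a, X), x |-> (y |-> x y),
   is a bijection (homs compared extensionally). *)
Definition is_sheaf (M : monoid) (F : (M -> Prop) -> Prop)
  (HF : grothendieck_topology F) (X : rmset M) : Prop :=
  forall I (HI : F I),
    (forall x x' : X,
       (forall y : ideal_rmset (top_ideal HF HI), ract X x (proj1_sig y) = ract X x' (proj1_sig y)) ->
       x = x') /\
    (forall h : rhom (ideal_rmset (top_ideal HF HI)) X,
       exists x : X, forall y, h y = ract X x (proj1_sig y)).

(* p_A "pitchfork" Sh(F): p_{A*}(S) is a sheaf for every set S *)
Definition pitchfork_sh (M : monoid) (F : (M -> Prop) -> Prop)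
  (HF : grothendieck_topology F) (A : lmset M) : Prop :=
  forall S : Type, is_sheaf HF (pstar A S).

Definition ideal_mult (M : monoid) (I : M -> Prop) (HI : right_ideal I) (A : lmset M)
  (t : tensor (ideal_rmset HI) A) : A :=
  let p := trep t in lact A (proj1_sig (fst p)) (snd p).

(* Main.v *)
Require Import Defs.
From Stdlib Require Import Relations ClassicalEpsilon FunctionalExtensionality PropExtensionality Classical.
Set Implicit Arguments.
Unset Strict Implicit.

Section TL.
Variables (M : monoid) (X : rmset M) (A : lmset M).

Lemma trel_eqpred (p q : X * A) : trel p q -> trel p = trel q.
Proof.
  intro H. apply functional_extensionality; intro r.
  apply propositional_extensionality; split; intro H'.
  - eapply rst_trans. apply rst_sym; exact H. exact H'.
  - eapply rst_trans. exact H. exact H'.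
Qed.

Lemma tens_trep (t : tensor X A) : tens (fst (trep t)) (snd (trep t)) = t.
Proof.
  destruct t as [P HP]. unfold trep, tens. simpl.
  destruct (constructive_indefinite_description _ HP) as [p Hp]. simpl.
  apply eq_sig_hprop.
  - intros; apply Classical_Prop.proof_irrelevance.
  - simpl. rewrite <- surjective_pairing. symmetry; exact Hp.
Qed.

Lemma trel_trep (x : X) (a : A) : trel (x, a) (trep (tens x a)).
Proof.
  unfold trep. destruct (constructive_indefinite_description _ _) as [p Hp]; simpl.
  simpl in Hp. rewrite Hp. apply rst_refl.
Qed.

Lemma lift_inv (S : Type) (g : X * A -> S) (Hg : forall p q, tgen p q -> g p = g q) :
  forall p q, trel p q -> g p = g q.
Proof.
  intros p q H. induction H.
  - apply Hg; assumption.
  - reflexivity.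
  - symmetry; assumption.
  - congruence.
Qed.

Lemma tens_eq (p q : X * A) : trel p q -> tens (fst p) (snd p) = tens (fst q) (snd q).
Proof.
  intro H. apply eq_sig_hprop.
  - intros; apply Classical_Prop.proof_irrelevance.
  - simpl. rewrite <- !surjective_pairing. apply trel_eqpred; exact H.
Qed.

Lemma lift_tens (S : Type) (g : X * A -> S) (Hg : forall p q, tgen p q -> g p = g q) x a :
  g (trep (tens x a)) = g (x, a).
Proof. symmetry. apply lift_inv; auto. apply trel_trep. Qed.
End TL.

Theorem lemma4p1 (M : monoid) (F : (M -> Prop) -> Prop)
  (HF : grothendieck_topology F) (A : lmset M) (HA : filtered A) :
  pitchfork_sh HF A <->
  (forall I (HI : F I), bij (@ideal_mult M I (top_ideal HF HI) A)).
Proof.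
  split.
  - intros Hsh I HI.
    set (J := ideal_rmset (top_ideal HF HI)).
    set (mu0 := fun p : J * A => lact A (proj1_sig (fst p)) (snd p)).
    assert (Hmu0 : forall p q, tgen p q -> mu0 p = mu0 q).
    { intros p q [x [m [a [-> ->]]]]. unfold mu0; simpl. symmetry; apply lact_mul. }
    assert (Hmu : forall y a, ideal_mult (tens (X:=J) (A:=A) y a) = lact A (proj1_sig y) a).
    { intros y a. unfold ideal_mult. exact (lift_tens Hmu0 y a). }
    split.
    +
      assert (Hh : forall (y : J) (m : M),
        (fun a => tens (X:=J) (A:=A) (ract J y m) a) = pstar_act (fun a : A => tens (X:=J) (A:=A) y a) m).
      { intros y m. apply functional_extensionality; intro a. unfold pstar_act.
        apply (tens_eq (p := (ract J y m, a)) (q := (y, lact A m a))).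
        apply rst_step. exists y, m, a. split; reflexivity. }
      set (h := @RHom M J (pstar A (tensor J A)) (fun (y : J) (a : A) => tens (X:=J) (A:=A) y a) Hh).
      destruct (proj2 (Hsh (tensor J A) I HI) h) as [al Hal].
      assert (Key : forall t : tensor J A, t = al (ideal_mult t)).
      { intro t.
        pose proof (f_equal (fun f => f (snd (trep t))) (Hal (fst (trep t)))) as E.
        simpl in E.
        transitivity (h (fst (trep t)) (snd (trep t))).
        { symmetry; apply tens_trep. }
        exact E. }
      intros t t' E. rewrite (Key t), (Key t'), E. reflexivity.
    +
      intro v.
      set (al := fun a : A => exists t : tensor J A, ideal_mult t = a).
      assert (E : al = (fun _ => True)).
      { apply (proj1 (Hsh Prop I HI)). intro y. simpl.
        apply functional_extensionality; intro a. unfold pstar_act.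
        apply propositional_extensionality; split; auto. intros _.
        exists (tens y a). apply Hmu. }
      assert (Hv : al v) by (rewrite E; exact Logic.I).
      exact Hv.
  - intros Hb S I HI.
    set (J := ideal_rmset (top_ideal HF HI)).
    destruct (Hb I HI) as [Hinj Hsurj].
    split.
    + intros al al' H. apply functional_extensionality; intro a.
      destruct (Hsurj a) as [t <-]. unfold ideal_mult.
      pose proof (f_equal (fun f => f (snd (trep t))) (H (fst (trep t)))) as E.
      simpl in E. exact E.
    + intro h.
      set (g0 := fun p : J * A => h (fst p) (snd p)).
      assert (Hg0 : forall p q, tgen p q -> g0 p = g0 q).
      { intros p q [x [m [a [-> ->]]]]. unfold g0; simpl.
        exact (f_equal (fun f => f a) (hequiv h x m)). }
      assert (Hmu0 : forall p q, tgen p q ->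
        (fun p : J * A => lact A (proj1_sig (fst p)) (snd p)) p =
        (fun p : J * A => lact A (proj1_sig (fst p)) (snd p)) q).
      { intros p q [x [m [a [-> ->]]]]. simpl. symmetry; apply lact_mul. }
      set (nu := fun a : A => proj1_sig (constructive_indefinite_description _ (Hsurj a))).
      exists (fun a => g0 (trep (nu a))).
      intro y. apply functional_extensionality; intro a. simpl. unfold pstar_act.
      assert (Hn : nu (lact A (proj1_sig y) a) = tens (X:=J) (A:=A) y a).
      { apply Hinj. unfold nu.
        destruct (constructive_indefinite_description _ _) as [t Ht]. simpl. rewrite Ht.
        unfold ideal_mult. symmetry. exact (lift_tens Hmu0 y a). }
      rewrite Hn. rewrite (lift_tens Hg0). reflexivity.
Qed.
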